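(* For all $(k,l,m)\in\mathbb{Z}^3$, $$R(k,l,m;a,b,c;x)=\frac{c(c+1)}{(a+1)(b+1)x(1-x)}\,Q(k-1,l-1,m-1;a+1,b+1,c+1;x).$$
   Context: $F(a,b,c;x)=\sum_{n\ge0}\frac{(a)_n(b)_n}{(c)_n n!}x^n$, $(\alpha)_n=\Gamma(\alpha+n)/\Gamma(\alpha)$. Standing assumption: $a,b,c-a,c-b,c,c-a-b,a-b\notin\mathbb{Z}$. For each $(k,l,m)\in\mathbb{Z}^3$, $Q(k,l,m;a,b,c;x)$ and $R(k,l,m;a,b,c;x)$ denote the unique rational functions of $a,b,c,x$ such that $F(a+k,b+l,c+m;x)=Q\cdot F(a+1,b+1,c+1;x)+R\cdot F(a,b,c;x)$; $Q(k,l,m;\alpha_1,\alpha_2,\alpha_3;\beta)$ denotes substitution of $a,b,c,x$ by $\alpha_1,\alpha_2,\alpha_3,\beta$. *)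

(* Defs.v *)
From Stdlib Require Import Reals ZArith List.
From Coquelicot Require Import Coquelicot.
Open Scope R_scope.

Fixpoint poch (alpha : R) (n : nat) : R :=
  match n with
  | O => 1
  | S n' => poch alpha n' * (alpha + INR n')
  end.

Definition hypF (a b c x : R) : R :=
  Series (fun n => poch a n * poch b n / (poch c n * INR (fact n)) * x ^ n).

Definition notint (y : R) : Prop := forall z : Z, y <> IZR z.

Definition standing (a b c : R) : Prop :=
  notint a /\ notint b /\ notint (c - a) /\ notint (c - b) /\
  notint c /\ notint (c - a - b) /\ notint (a - b).

(* Real polynomials in the four variables (a,b,c,x), as finite lists of
   monomials  coef * a^i * b^j * c^k * x^l. *)
Definition poly4 := list (R * (nat * nat * nat * nat)).

Definition peval (p : poly4) (a b c x : R) : R :=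
  fold_right (fun (m : R * (nat * nat * nat * nat)) acc =>
    match m with (r, (i, j, k, l)) => r * a ^ i * b ^ j * c ^ k * x ^ l + acc end)
    0 p.

Record ratfun := Ratfun { rnum : poly4; rden : poly4 }.

Definition rvalid (f : ratfun) : Prop :=
  exists a b c x, peval (rden f) a b c x <> 0.

Definition rdefined (f : ratfun) (a b c x : R) : Prop :=
  peval (rden f) a b c x <> 0.

Definition reval (f : ratfun) (a b c x : R) : R :=
  peval (rnum f) a b c x / peval (rden f) a b c x.

(* (Q,R) are the rational functions of the contiguous relation
     F(a+k,b+l,c+m;x) = Q * F(a+1,b+1,c+1;x) + R * F(a,b,c;x)
   i.e. Q(k,l,m;a,b,c;x) and R(k,l,m;a,b,c;x). *)
Definition contiguous (k l m : Z) (Qf Rf : ratfun) : Prop :=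
  rvalid Qf /\ rvalid Rf /\
  forall a b c x : R,
    standing a b c -> -1 < x < 1 ->
    rdefined Qf a b c x -> rdefined Rf a b c x ->
    hypF (a + IZR k) (b + IZR l) (c + IZR m) x =
      reval Qf a b c x * hypF (a + 1) (b + 1) (c + 1) x + reval Rf a b c x * hypF a b c x.

(* Main.v *)
Require Import Defs.
From Stdlib Require Import Reals ZArith.
From Coquelicot Require Import Coquelicot.
From Stdlib Require Import List Lia Lra Classical.
Open Scope R_scope.

Fixpoint heval (l : list R) (x : R) : R :=
  match l with nil => 0 | c :: l' => c + x * heval l' x end.
Definition IsP (f : R -> R) := exists l, forall x, f x = heval l x.

Fixpoint ladd (l m : list R) : list R :=
  match l, m with
  | nil, _ => m
  | _, nil => l
  | a :: l', b :: m' => (a + b) :: ladd l' m'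
  end.
Lemma ladd_ok l m x : heval (ladd l m) x = heval l x + heval m x.
Proof.
  revert m; induction l as [|a l IH]; intros [|b m]; simpl; try lra.
  rewrite IH; ring.
Qed.
Lemma ladd_len l m : (length (ladd l m) <= Nat.max (length l) (length m))%nat.
Proof.
  revert m; induction l as [|a l IH]; intros [|b m]; simpl; try lia.
  specialize (IH m); lia.
Qed.
Definition lscal (c : R) (l : list R) := map (Rmult c) l.
Lemma lscal_ok c l x : heval (lscal c l) x = c * heval l x.
Proof. induction l; simpl; [ring|]. rewrite IHl; ring. Qed.
Lemma lscal_len c l : length (lscal c l) = length l.
Proof. apply length_map. Qed.
Fixpoint lmul (l m : list R) : list R :=
  match l with nil => nil | a :: l' => ladd (lscal a m) (0 :: lmul l' m) end.
Lemma lmul_ok l m x : heval (lmul l m) x = heval l x * heval m x.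
Proof. induction l; simpl; [ring|]. rewrite ladd_ok, lscal_ok; simpl; rewrite IHl; ring. Qed.

Lemma IsP_ext f g : IsP f -> (forall x, f x = g x) -> IsP g.
Proof. intros [l H] E; exists l; intros; rewrite <- E; auto. Qed.
Lemma IsP_const c : IsP (fun _ => c).
Proof. exists (c :: nil); intros; simpl; ring. Qed.
Lemma IsP_id : IsP (fun x => x).
Proof. exists (0 :: 1 :: nil); intros; simpl; ring. Qed.
Lemma IsP_plus f g : IsP f -> IsP g -> IsP (fun x => f x + g x).
Proof. intros [l H] [m K]; exists (ladd l m); intros; rewrite ladd_ok, H, K; auto. Qed.
Lemma IsP_mult f g : IsP f -> IsP g -> IsP (fun x => f x * g x).
Proof. intros [l H] [m K]; exists (lmul l m); intros; rewrite lmul_ok, H, K; auto. Qed.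
Lemma IsP_opp f : IsP f -> IsP (fun x => - f x).
Proof. intros H; apply IsP_ext with (fun x => (-1) * f x); [apply IsP_mult; auto; apply IsP_const|intros; ring]. Qed.
Lemma IsP_minus f g : IsP f -> IsP g -> IsP (fun x => f x - g x).
Proof. intros; apply IsP_plus; auto; apply IsP_opp; auto. Qed.
Lemma IsP_pow f n : IsP f -> IsP (fun x => f x ^ n).
Proof. intros H; induction n; simpl; [apply IsP_const|apply IsP_mult; auto]. Qed.
Lemma IsP_heval l : IsP (heval l).
Proof. exists l; auto. Qed.
Lemma IsP_shift f t : IsP f -> IsP (fun x => f (x + t)).
Proof.
  intros [l H]. apply IsP_ext with (fun x => heval l (x + t)); [|intros; rewrite H; auto].
  clear H. induction l; simpl; [apply IsP_const|].
  apply IsP_plus; [apply IsP_const|apply IsP_mult; auto].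
  apply IsP_plus; [apply IsP_id|apply IsP_const].
Qed.

Fixpoint sumR (n : nat) (f : nat -> R) : R :=
  match n with O => 0 | S n' => sumR n' f + f n' end.
Lemma IsP_sumR n (F : nat -> R -> R) : (forall i, IsP (F i)) -> IsP (fun x => sumR n (fun i => F i x)).
Proof. intros H; induction n; simpl; [apply IsP_const|apply IsP_plus; auto]. Qed.

Lemma heval_div l r : exists q, (length q <= pred (length l))%nat /\
  forall x, heval l x - heval l r = (x - r) * heval q x.
Proof.
  induction l as [|c l1 IH].
  - exists nil; split; simpl; [lia|intros; ring].
  - destruct IH as [q1 [Hl Hq]].
    exists (ladd l1 (lscal r q1)); split.
    + simpl. pose proof (ladd_len l1 (lscal r q1)). rewrite lscal_len in H. lia.
    + intros x; simpl. rewrite ladd_ok, lscal_ok.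
      replace (c + x * heval l1 x - (c + r * heval l1 r)) with
        ((x - r) * heval l1 x + r * (heval l1 x - heval l1 r)) by ring.
      rewrite Hq; ring.
Qed.

Definition Sinf (S : R -> Prop) := forall L : list R, exists s, S s /\ ~ In s L.

Lemma Sinf_remove S r : Sinf S -> Sinf (fun s => S s /\ s <> r).
Proof.
  intros H L; destruct (H (r :: L)) as [s [Hs Hn]]; exists s; simpl in Hn; intuition.
Qed.

Lemma ident_aux n : forall l, (length l <= n)%nat -> forall S, Sinf S ->
  (forall s, S s -> heval l s = 0) -> forall x, heval l x = 0.
Proof.
  induction n; intros l Hl S HS H x.
  - destruct l; simpl in *; [auto|lia].
  - destruct (HS nil) as [r [Hr _]].
    destruct (heval_div l r) as [q [Hq E]].
    assert (Hq0 : forall y, heval q y = 0).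
    { apply (IHn q ltac:(lia) _ (Sinf_remove S r HS)).
      intros s [Hs Hsr]. specialize (E s). rewrite H, H in E by auto.
      assert (s - r <> 0) by lra.
      apply (Rmult_eq_reg_l (s - r)); auto. lra. }
    specialize (E x). rewrite Hq0, (H r Hr) in E. lra.
Qed.

Lemma IsP_ident f S : IsP f -> Sinf S -> (forall s, S s -> f s = 0) -> forall x, f x = 0.
Proof.
  intros [l Hl] HS H x. rewrite Hl.
  apply (ident_aux (length l) l (le_n _) S HS); auto.
  intros s Hs; rewrite <- Hl; auto.
Qed.

Lemma Sinf_filter S f y0 : Sinf S -> IsP f -> f y0 <> 0 -> Sinf (fun s => S s /\ f s <> 0).
Proof.
  intros HS Hf Hy L. apply NNPP; intro Hno.
  apply Hy. apply (IsP_ident f (fun s => S s /\ ~ In s L)); auto.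
  - intros L'. destruct (HS (L ++ L')) as [s [Hs Hn]]. exists s.
    repeat split; auto; intro; apply Hn; apply in_or_app; auto.
  - intros s [Hs Hn]. apply NNPP; intro Hfs. apply Hno; exists s; auto.
Qed.

Lemma interval_avoid_list l r L : l < r -> exists l' r', l <= l' < r' /\ r' <= r /\
  forall y, l' < y < r' -> ~ In y L.
Proof.
  intros Hlr; induction L as [|t L IH].
  - exists l, r; repeat split; try lra; auto.
  - destruct IH as [l' [r' [H1 [H2 H3]]]].
    destruct (Rlt_dec l' t) as [Ht1|Ht1]; [destruct (Rlt_dec t r') as [Ht2|Ht2]|].
    + exists l', t; repeat split; try lra.
      intros y Hy [E|E]; [lra|]. apply (H3 y); auto; lra.
    + exists l', r'; repeat split; try lra. intros y Hy [E|E]; [lra|]. apply (H3 y); auto.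
    + exists l', r'; repeat split; try lra. intros y Hy [E|E]; [lra|]. apply (H3 y); auto.
Qed.

Lemma Sinf_interval l r : l < r -> Sinf (fun x => l < x < r).
Proof.
  intros H L. destruct (interval_avoid_list l r L H) as [l' [r' [H1 [H2 H3]]]].
  exists ((l' + r') / 2); split; [lra|]. apply H3; lra.
Qed.

Lemma Sinf_nat k : Sinf (fun x => exists n, (k <= n)%nat /\ x = INR n).
Proof.
  intros L.
  assert (exists n0, forall n, (n0 <= n)%nat -> ~ In (INR n) L) as [n0 Hn0].
  { induction L as [|t L IH].
    - exists O; intros n _ [].
    - destruct IH as [n0 H0]. destruct (INR_unbounded t) as [n1 H1].
      exists (Nat.max n0 n1). intros n Hn [E|E].
      + assert (INR n1 <= INR n) by (apply le_INR; lia). lra.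
      + apply (H0 n); auto; lia. }
  exists (INR (Nat.max k n0)); split.
  - exists (Nat.max k n0); split; auto; lia.
  - apply Hn0; lia.
Qed.

Definition notint' (y : R) : Prop := forall z : Z, y <> IZR z.

Lemma interval_avoid_int l r t : l < r -> exists l' r', l <= l' < r' /\ r' <= r /\
  forall y, l' < y < r' -> forall z : Z, y - t <> IZR z.
Proof.
  intros Hlr. destruct (archimed (l - t)) as [A1 A2]. set (z := up (l - t)) in *.
  assert (Hy : forall y, l < y -> y - t < IZR z -> forall w : Z, y - t <> IZR w).
  { intros y Hy1 Hy2 w E. rewrite E in *.
    assert (IZR z - 1 < IZR w) by lra.
    replace (IZR z - 1) with (IZR (z - 1)) in H by (rewrite minus_IZR; auto).
    apply lt_IZR in H. apply lt_IZR in Hy2. lia. }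
  destruct (Rlt_dec (t + IZR z) r) as [Hc|Hc].
  - exists l, (t + IZR z); repeat split; try lra. intros y Hy'; apply Hy; lra.
  - exists l, r; repeat split; try lra. intros y Hy'; apply Hy; lra.
Qed.


Definition MP (f : R -> R -> R -> R -> R) :=
  (forall b c x, IsP (fun a => f a b c x)) /\ (forall a c x, IsP (fun b => f a b c x)) /\
  (forall a b x, IsP (fun c => f a b c x)) /\ (forall a b c, IsP (fun x => f a b c x)).

Ltac isp := repeat first [ apply IsP_plus | apply IsP_mult | apply IsP_minus | apply IsP_opp
  | apply IsP_pow | apply IsP_id | apply IsP_const ].

Lemma MP_peval p : MP (peval p).
Proof.
  induction p as [|[r [[[i j] k] l]] p IH].
  - repeat split; intros; (eapply IsP_ext; [apply (IsP_const 0)|reflexivity]).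
  - destruct IH as [H1 [H2 [H3 H4]]]; repeat split; intros;
    (eapply IsP_ext; [|intros; reflexivity]); cbv beta;
    (apply IsP_plus; [isp|]); [ apply H1 | apply H2 | apply H3 | apply H4 ].
Qed.

Lemma MP_plus f g : MP f -> MP g -> MP (fun a b c x => f a b c x + g a b c x).
Proof. intros [? [? [? ?]]] [? [? [? ?]]]; repeat split; intros; apply IsP_plus; auto. Qed.
Lemma MP_minus f g : MP f -> MP g -> MP (fun a b c x => f a b c x - g a b c x).
Proof. intros [? [? [? ?]]] [? [? [? ?]]]; repeat split; intros; apply IsP_minus; auto. Qed.
Lemma MP_mult f g : MP f -> MP g -> MP (fun a b c x => f a b c x * g a b c x).
Proof. intros [? [? [? ?]]] [? [? [? ?]]]; repeat split; intros; apply IsP_mult; auto. Qed.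
Lemma MP_const r : MP (fun _ _ _ _ => r).
Proof. repeat split; intros; apply IsP_const. Qed.
Lemma MP_a : MP (fun a _ _ _ => a).
Proof. repeat split; intros; first [apply IsP_id | apply IsP_const]. Qed.
Lemma MP_b : MP (fun _ b _ _ => b).
Proof. repeat split; intros; first [apply IsP_id | apply IsP_const]. Qed.
Lemma MP_c : MP (fun _ _ c _ => c).
Proof. repeat split; intros; first [apply IsP_id | apply IsP_const]. Qed.
Lemma MP_x : MP (fun _ _ _ x => x).
Proof. repeat split; intros; first [apply IsP_id | apply IsP_const]. Qed.
Lemma MP_shift f : MP f -> MP (fun a b c x => f (a + 1) (b + 1) (c + 1) x).
Proof.
  intros [H1 [H2 [H3 H4]]]; repeat split; intros.
  - apply (IsP_shift (fun a => f a (b+1) (c+1) x) 1); auto.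
  - apply (IsP_shift (fun b => f (a+1) b (c+1) x) 1); auto.
  - apply (IsP_shift (fun c => f (a+1) (b+1) c x) 1); auto.
  - auto.
Qed.

Lemma notint_01 y : 0 < y < 1 -> notint y.
Proof.
  intros H z E; subst. destruct H as [H1 H2]. apply lt_IZR in H1.
  apply lt_IZR in H2. lia.
Qed.

Lemma notint_opp y : notint y -> notint (- y).
Proof. intros H z E. apply (H (- z)%Z). rewrite opp_IZR; lra. Qed.

Lemma interval_avoid_many (ts : list R) : exists l r, 0 <= l < r /\ r <= 1 /\
  forall y, l < y < r -> Forall (fun t => notint (y - t)) ts.
Proof.
  induction ts as [|t ts IH].
  - exists 0, 1; repeat split; try lra; auto.
  - destruct IH as [l [r [H1 [H2 H3]]]].
    destruct (interval_avoid_int l r t ltac:(lra)) as [l' [r' [K1 [K2 K3]]]].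
    exists l', r'; repeat split; try lra.
    intros y Hy. constructor.
    + intros z; apply K3; auto.
    + apply H3; lra.
Qed.

Lemma nonzero_prod f g a0 b0 c0 x0 a1 b1 c1 x1 : MP f -> MP g ->
  f a0 b0 c0 x0 <> 0 -> g a1 b1 c1 x1 <> 0 ->
  exists a b c x, f a b c x * g a b c x <> 0.
Proof.
  intros [F1 [F2 [F3 F4]]] [G1 [G2 [G3 G4]]] Hf Hg.
  pose proof (Sinf_interval 0 1 ltac:(lra)) as S0.
  destruct (Sinf_filter _ _ _ (Sinf_filter _ _ _ S0 (F1 b0 c0 x0) Hf) (G1 b1 c1 x1) Hg nil)
    as [a [[[_ Ha1] Ha2] _]].
  destruct (Sinf_filter _ _ _ (Sinf_filter _ _ _ S0 (F2 a c0 x0) Ha1) (G2 a c1 x1) Ha2 nil)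
    as [b [[[_ Hb1] Hb2] _]].
  destruct (Sinf_filter _ _ _ (Sinf_filter _ _ _ S0 (F3 a b x0) Hb1) (G3 a b x1) Hb2 nil)
    as [c [[[_ Hc1] Hc2] _]].
  destruct (Sinf_filter _ _ _ (Sinf_filter _ _ _ S0 (F4 a b c) Hc1) (G4 a b c) Hc2 nil)
    as [x [[[_ Hx1] Hx2] _]].
  exists a, b, c, x. apply Rmult_integral_contrapositive; auto.
Qed.

Lemma chain D P a0 b0 c0 x0 : MP D -> MP P -> D a0 b0 c0 x0 <> 0 ->
  (forall a b c x, standing a b c -> -1 < x < 1 -> D a b c x <> 0 -> P a b c x = 0) ->
  forall a b c x, P a b c x = 0.
Proof.
  intros [D1 [D2 [D3 D4]]] [P1 [P2 [P3 P4]]] HD H.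
  assert (Lx : forall a b c, standing a b c -> D a b c x0 <> 0 -> forall x, P a b c x = 0).
  { intros a b c Hs Hd.
    apply (IsP_ident _ _ (P4 a b c)
      (Sinf_filter _ _ _ (Sinf_interval (-1) 1 ltac:(lra)) (D4 a b c) Hd)).
    intros s [Hs1 Hs2]; apply H; auto. }
  assert (Lc : forall a b, notint a -> notint b -> notint (a - b) -> D a b c0 x0 <> 0 ->
     forall c x, P a b c x = 0).
  { intros a b Ha Hb Hab Hd c x.
    destruct (interval_avoid_many (a :: b :: (a + b) :: nil)) as [l [r [I1 [I2 I3]]]].
    revert c; apply (IsP_ident _ _ (P3 a b x)
      (Sinf_filter _ _ _ (Sinf_interval l r ltac:(lra)) (D3 a b x0) Hd)).
    intros c [Hc1 Hc2]. apply Lx; auto.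
    pose proof (I3 c Hc1) as F. inversion F as [|? ? Fa F']; subst.
    inversion F' as [|? ? Fb F'']; subst. inversion F'' as [|? ? Fab _]; subst.
    unfold standing; refine (conj Ha (conj Hb (conj _ (conj _ (conj _ (conj _ Hab)))))).
    + intros z E; apply (Fa z); lra.
    + intros z E; apply (Fb z); lra.
    + apply notint_01; lra.
    + intros z E; apply (Fab z); lra. }
  assert (Lb : forall a, notint a -> D a b0 c0 x0 <> 0 -> forall b c x, P a b c x = 0).
  { intros a Ha Hd b c x.
    destruct (interval_avoid_many (a :: nil)) as [l [r [I1 [I2 I3]]]].
    revert b; apply (IsP_ident _ _ (P2 a c x)
      (Sinf_filter _ _ _ (Sinf_interval l r ltac:(lra)) (D2 a c0 x0) Hd)).
    intros b [Hb1 Hb2]. apply Lc; auto.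
    + apply notint_01; lra.
    + pose proof (I3 b Hb1) as F. inversion F; subst.
      intros z E; apply (H2 (- z)%Z); rewrite opp_IZR; lra. }
  intros a b c x. revert a.
  apply (IsP_ident _ _ (P1 b c x)
      (Sinf_filter _ _ _ (Sinf_interval 0 1 ltac:(lra)) (D1 b0 c0 x0) HD)).
  intros a [Ha1 Ha2]; apply Lb; auto. apply notint_01; lra.
Qed.


Definition gco (A B C : R) (n : nat) : R :=
  poch A n * poch B n / (poch C n * INR (fact n)).

Lemma hypF_PSeries A B C x : hypF A B C x = PSeries (gco A B C) x.
Proof. reflexivity. Qed.

Lemma notint_plus_nat A n : notint A -> A + INR n <> 0.
Proof.
  intros H E. apply (H (- Z.of_nat n)%Z). rewrite opp_IZR, <- INR_IZR_INZ. lra.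
Qed.

Lemma poch_nz A n : notint A -> poch A n <> 0.
Proof.
  intros H; induction n; simpl; [lra|].
  apply Rmult_integral_contrapositive; split; auto. apply notint_plus_nat; auto.
Qed.

Lemma poch_S_left A n : poch A (S n) = A * poch (A + 1) n.
Proof.
  induction n; simpl in *; [ring|].
  rewrite IHn. destruct n; simpl; ring.
Qed.

Lemma fact_nz n : INR (fact n) <> 0.
Proof. apply not_0_INR, fact_neq_0. Qed.

Lemma gco_0 A B C : gco A B C 0 = 1.
Proof. unfold gco; simpl; field. Qed.

Lemma gco_nz A B C n : notint A -> notint B -> notint C -> gco A B C n <> 0.
Proof.
  intros; unfold gco. pose proof (poch_nz A n H). pose proof (poch_nz B n H0).
  pose proof (poch_nz C n H1). pose proof (fact_nz n).
  unfold Rdiv; repeat apply Rmult_integral_contrapositive; split; auto.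
  apply Rinv_neq_0_compat; apply Rmult_integral_contrapositive; auto.
Qed.

Lemma gco_S A B C n : notint C ->
  gco A B C (S n) = gco A B C n * ((A + INR n) * (B + INR n)) / ((C + INR n) * (INR n + 1)).
Proof.
  intros HC. unfold gco. pose proof (poch_nz C n HC). pose proof (fact_nz n).
  pose proof (notint_plus_nat C n HC).
  change (fact (S n)) with (S n * fact n)%nat. rewrite mult_INR, S_INR.
  simpl poch. field. repeat split; auto. pose proof (pos_INR n); lra.
Qed.

Lemma gco_shift A B C n : notint A -> notint B -> notint C ->
  gco (A + 1) (B + 1) (C + 1) n = C / (A * B) * (INR n + 1) * gco A B C (S n).
Proof.
  intros HA HB HC. unfold gco. rewrite !poch_S_left.
  change (fact (S n)) with (S n * fact n)%nat. rewrite mult_INR, S_INR.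
  assert (A <> 0) by (intro E; apply (HA 0%Z); auto).
  assert (B <> 0) by (intro E; apply (HB 0%Z); auto).
  assert (C <> 0) by (intro E; apply (HC 0%Z); auto).
  assert (poch (C + 1) n <> 0).
  { apply poch_nz. intros z E. apply (HC (z - 1)%Z). rewrite minus_IZR; simpl; lra. }
  pose proof (fact_nz n). pose proof (pos_INR n).
  field. repeat split; auto; lra.
Qed.

Lemma notint_shift1 A : notint A -> notint (A + 1).
Proof. intros H z E. apply (H (z - 1)%Z). rewrite minus_IZR; simpl; lra. Qed.

Lemma lim_inv_S : is_lim_seq (fun n => / (INR n + 1)) 0.
Proof.
  assert (H : is_lim_seq (fun n => INR n + 1) p_infty).
  { pose proof is_lim_seq_INR as H0. apply is_lim_seq_incr_1 in H0.
    eapply is_lim_seq_ext; [|apply H0]. intros n; cbv beta; rewrite (S_INR n); auto. }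
  apply is_lim_seq_inv in H; [|discriminate]. simpl in H. auto.
Qed.

Lemma lin_cont a : continuity_pt (fun e => a * e + 1) 0.
Proof.
  apply continuity_pt_plus; [apply continuity_pt_mult|];
  try apply continuity_pt_id; apply continuity_pt_const; intros ? ?; reflexivity.
Qed.

Lemma gco_radius A B C : notint A -> notint B -> notint C -> CV_radius (gco A B C) = 1.
Proof.
  intros HA HB HC.
  replace 1 with (/ 1) by field.
  apply CV_radius_finite_DAlembert; [intros; apply gco_nz; auto|lra|].
  set (h := fun e => Rabs (((A - 1) * e + 1) * ((B - 1) * e + 1) / ((C - 1) * e + 1))).
  assert (Hc : continuity_pt h 0).
  { unfold h. apply continuity_pt_comp with
      (f1 := fun e => ((A - 1) * e + 1) * ((B - 1) * e + 1) / ((C - 1) * e + 1)).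
    - apply continuity_pt_div; [apply continuity_pt_mult; apply lin_cont|apply lin_cont|lra].
    - apply Rcontinuity_abs. }
  pose proof (is_lim_seq_continuous h _ 0 Hc lim_inv_S) as L.
  replace (h 0) with 1 in L by (unfold h; rewrite !Rmult_0_r, !Rplus_0_l, Rdiv_1_r, Rmult_1_r, Rabs_R1; auto).
  eapply is_lim_seq_ext; [|apply L]. intros n; simpl. unfold h. f_equal.
  rewrite gco_S by auto. pose proof (gco_nz A B C n HA HB HC).
  pose proof (pos_INR n). pose proof (notint_plus_nat C n HC).
  field. repeat split; auto; try lra.
Qed.


Definition conv (l : list R) (g : nat -> R) (N : nat) : R :=
  sumR (S N) (fun i => nth i l 0 * g (N - i)%nat).

Lemma sumR_shift n f : sumR (S n) f = f O + sumR n (fun i => f (S i)).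
Proof. induction n; simpl in *; [ring|]. rewrite IHn; ring. Qed.

Lemma sumR_ext n f g : (forall i, (i < n)%nat -> f i = g i) -> sumR n f = sumR n g.
Proof. induction n; intros H; simpl; auto. rewrite IHn, H; auto. Qed.

Lemma sumR_split n m f : sumR (n + m) f = sumR n f + sumR m (fun i => f (n + i)%nat).
Proof. induction m; simpl; [rewrite Nat.add_0_r; ring|]. rewrite Nat.add_succ_r; simpl; rewrite IHm; ring. Qed.

Lemma sumR_zero n f : (forall i, (i < n)%nat -> f i = 0) -> sumR n f = 0.
Proof. intros H; rewrite (sumR_ext n f (fun _ => 0)); auto. induction n; simpl; auto; rewrite IHn; auto; ring. Qed.

Lemma sumR_plus n f g : sumR n (fun i => f i + g i) = sumR n f + sumR n g.
Proof. induction n; simpl; [ring|rewrite IHn; ring]. Qed.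
Lemma sumR_scal n c f : sumR n (fun i => c * f i) = c * sumR n f.
Proof. induction n; simpl; [ring|rewrite IHn; ring]. Qed.

Lemma conv_cons c l g N : conv (c :: l) g N =
  PS_plus (PS_scal c g) (PS_incr_1 (conv l g)) N.
Proof.
  unfold conv at 1. rewrite sumR_shift, Nat.sub_0_r.
  change (nth 0 (c :: l) 0) with c.
  destruct N as [|N].
  - change (PS_plus (PS_scal c g) (PS_incr_1 (conv l g)) 0) with (c * g O + 0). simpl; ring.
  - change (PS_plus (PS_scal c g) (PS_incr_1 (conv l g)) (S N)) with (c * g (S N) + conv l g N).
    reflexivity.
Qed.

Lemma radius_plus r a b : Rbar_lt r (CV_radius a) -> Rbar_lt r (CV_radius b) ->
  Rbar_lt r (CV_radius (PS_plus a b)).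
Proof.
  intros Ha Hb. eapply Rbar_lt_le_trans; [|apply CV_radius_plus].
  apply Rbar_min_case; auto.
Qed.

Lemma radius_scal (r : R) c a : Rbar_lt r (CV_radius a) -> Rbar_lt r (CV_radius (PS_scal c a)).
Proof.
  intros Ha. destruct (Req_dec c 0) as [E|E].
  - subst. rewrite (CV_radius_ext _ (fun _ => 0)); [rewrite CV_radius_const_0; simpl; auto|].
    intros n; unfold PS_scal, scal; simpl; unfold mult; simpl; ring.
  - rewrite CV_radius_scal; auto.
Qed.

Lemma conv_radius (r : R) l g : Rbar_lt r (CV_radius g) -> Rbar_lt r (CV_radius (conv l g)).
Proof.
  intros H; induction l as [|c l IH].
  - rewrite (CV_radius_ext _ (fun _ => 0)); [rewrite CV_radius_const_0; simpl; auto|].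
    intros n; unfold conv. apply sumR_zero. intros i _; destruct i; simpl; ring.
  - rewrite (CV_radius_ext _ _ (conv_cons c l g)).
    apply radius_plus; [apply radius_scal; auto|rewrite CV_radius_incr_1; auto].
Qed.

Lemma conv_PSeries l g x : Rbar_lt (Rabs x) (CV_radius g) ->
  PSeries (conv l g) x = heval l x * PSeries g x.
Proof.
  intros H; induction l as [|c l IH].
  - simpl. rewrite (PSeries_ext _ (fun _ => 0)).
    + rewrite PSeries_const_0; ring.
    + intros n; unfold conv. apply sumR_zero. intros i _; destruct i; simpl; ring.
  - rewrite (PSeries_ext _ _ x (conv_cons c l g)).
    rewrite PSeries_plus.
    + rewrite PSeries_scal, PSeries_incr_1, IH. simpl. unfold scal; simpl; unfold mult; simpl; ring.
    + apply ex_pseries_scal; [apply Rmult_comm|]. apply CV_radius_inside; auto.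
    + apply ex_pseries_incr_1. apply CV_radius_inside. apply conv_radius; auto.
Qed.

Lemma pseries_zero_coef h : Rbar_lt 0 (CV_radius h) ->
  (forall x, -1 < x < 1 -> PSeries h x = 0) -> forall n, h n = 0.
Proof.
  intros Hr H n.
  apply (PSeries_ext_recip h (fun _ => 0) n Hr).
  - rewrite CV_radius_const_0; simpl; auto.
  - exists (mkposreal 1 Rlt_0_1). intros y Hy.
    rewrite PSeries_const_0. apply H.
    change (Rabs (y - 0) < 1) in Hy. rewrite Rminus_0_r in Hy.
    apply Rabs_def2 in Hy; lra.
Qed.


Lemma conv_trunc K l g N : (forall i, (K <= i)%nat -> nth i l 0 = 0) -> (K <= S N)%nat ->
  conv l g N = sumR K (fun i => nth i l 0 * g (N - i)%nat).
Proof.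
  intros H HK. unfold conv. replace (S N) with (K + (S N - K))%nat by lia.
  rewrite sumR_split. rewrite (sumR_zero (S N - K)); [ring|].
  intros i _; rewrite H; [ring|lia].
Qed.

Lemma nint_nz A : notint A -> A <> 0.
Proof. intros H E; apply (H 0%Z); auto. Qed.

Lemma three_term_coef a b c N : notint a -> notint b -> notint c ->
  conv (c * (c + 1) :: nil) (gco a b c) N =
  conv (0 :: (a+1)*(b+1) :: - ((a+1)*(b+1)) :: nil) (gco (a+1+1) (b+1+1) (c+1+1)) N +
  conv ((c+1)*c :: - ((c+1)*(a+b+1)) :: nil) (gco (a+1) (b+1) (c+1)) N.
Proof.
  intros Ha Hb Hc.
  pose proof (notint_shift1 _ Ha) as Ha1. pose proof (notint_shift1 _ Hb) as Hb1.
  pose proof (notint_shift1 _ Hc) as Hc1.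
  pose proof (nint_nz _ Ha). pose proof (nint_nz _ Hb). pose proof (nint_nz _ Hc).
  pose proof (nint_nz _ Ha1). pose proof (nint_nz _ Hb1). pose proof (nint_nz _ Hc1).
  destruct N as [|[|M]].
  - unfold conv; simpl.
    rewrite !gco_shift by auto. rewrite !gco_S by auto. rewrite gco_0. simpl.
    field; repeat split; auto.
  - unfold conv; simpl.
    rewrite !gco_shift by auto. rewrite !gco_S by auto. rewrite gco_0. simpl.
    assert (c + 2 <> 0) by (intro E; apply (Hc (-2)%Z); simpl; lra).
    field; repeat split; auto; try lra.
  - rewrite (conv_trunc 1 (c * (c + 1) :: nil)) by
      (try lia; intros i Hi; do 1 (destruct i; [lia|]); simpl; destruct i; auto).
    rewrite (conv_trunc 3 (0 :: _ :: _ :: nil)) by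
      (try lia; intros i Hi; do 3 (destruct i; [lia|]); simpl; destruct i; auto).
    rewrite (conv_trunc 2 (_ :: _ :: nil)) by
      (try lia; intros i Hi; do 2 (destruct i; [lia|]); simpl; destruct i; auto).
    simpl sumR. simpl nth. replace (S (S M) - 0)%nat with (S (S M)) by lia.
    replace (S (S M) - 1)%nat with (S M) by lia. replace (S (S M) - 2)%nat with M by lia.
    rewrite ?Nat.sub_0_r. rewrite !gco_shift by auto. repeat rewrite (gco_S a b c) by auto.
    rewrite !S_INR.
    pose proof (notint_plus_nat c M Hc). pose proof (notint_plus_nat c (S M) Hc).
    pose proof (notint_plus_nat c (S (S M)) Hc). pose proof (notint_plus_nat c (S (S (S M))) Hc). rewrite !S_INR in *.
    pose proof (pos_INR M).
    field; repeat split; auto; lra.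
Qed.

Lemma radius_lt A B C x : notint A -> notint B -> notint C -> -1 < x < 1 ->
  Rbar_lt (Rabs x) (CV_radius (gco A B C)).
Proof.
  intros. rewrite gco_radius by auto. simpl. apply Rabs_def1; lra.
Qed.

Lemma three_term a b c x : notint a -> notint b -> notint c -> -1 < x < 1 ->
  c * (c + 1) * hypF a b c x =
  (a+1)*(b+1)*(x*(1-x)) * hypF (a+1+1) (b+1+1) (c+1+1) x +
  (c+1)*(c - (a+b+1)*x) * hypF (a+1) (b+1) (c+1) x.
Proof.
  intros Ha Hb Hc Hx.
  pose proof (notint_shift1 _ Ha) as Ha1. pose proof (notint_shift1 _ Hb) as Hb1.
  pose proof (notint_shift1 _ Hc) as Hc1.
  pose proof (notint_shift1 _ Ha1) as Ha2. pose proof (notint_shift1 _ Hb1) as Hb2.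
  pose proof (notint_shift1 _ Hc1) as Hc2.
  rewrite !hypF_PSeries.
  replace (c * (c + 1) * PSeries (gco a b c) x) with
    (heval (c * (c + 1) :: nil) x * PSeries (gco a b c) x) by (simpl; ring).
  replace ((a+1)*(b+1)*(x*(1-x))) with (heval (0 :: (a+1)*(b+1) :: - ((a+1)*(b+1)) :: nil) x)
    by (simpl; ring).
  replace ((c+1)*(c - (a+b+1)*x)) with (heval ((c+1)*c :: - ((c+1)*(a+b+1)) :: nil) x)
    by (simpl; ring).
  rewrite <- !conv_PSeries by (apply radius_lt; auto).
  rewrite (PSeries_ext _ _ x (fun N => three_term_coef a b c N Ha Hb Hc)).
  apply PSeries_plus; apply CV_radius_inside; apply conv_radius; apply radius_lt; auto.
Qed.


Fixpoint Gf (A B : R) (k : nat) (y : R) : R :=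
  match k with O => 1 | S k' => (A + y) * (B + y) * Gf A B k' (y + 1) end.
Fixpoint Hf (C : R) (k : nat) (y : R) : R :=
  match k with O => 1 | S k' => (C + y) * (y + 1) * Hf C k' (y + 1) end.

Lemma IsP_Gf A B k : IsP (Gf A B k).
Proof.
  induction k; simpl; [apply IsP_const|].
  apply IsP_mult; [apply IsP_mult; apply IsP_plus; try apply IsP_const; apply IsP_id|].
  apply (IsP_shift (Gf A B k) 1 IHk).
Qed.
Lemma IsP_Hf C k : IsP (Hf C k).
Proof.
  induction k; simpl; [apply IsP_const|].
  apply IsP_mult; [apply IsP_mult; apply IsP_plus; try apply IsP_const; apply IsP_id|].
  apply (IsP_shift (Hf C k) 1 IHk).
Qed.

Lemma Hf_add C a b y : Hf C (a + b) y = Hf C a y * Hf C b (y + INR a).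
Proof.
  revert y; induction a; intros y; [cbn [Hf Nat.add INR]; rewrite Rplus_0_r; ring|].
  rewrite Nat.add_succ_l; cbn [Hf].
  rewrite IHa. rewrite S_INR. replace (y + 1 + INR a) with (y + (INR a + 1)) by ring. ring.
Qed.

Lemma gco_step A B C m : notint C ->
  gco A B C (S m) * ((C + INR m) * (INR m + 1)) = gco A B C m * ((A + INR m) * (B + INR m)).
Proof.
  intros HC. rewrite gco_S by auto. pose proof (notint_plus_nat C m HC). pose proof (pos_INR m).
  field. split; auto; lra.
Qed.

Lemma gco_GH A B C k : notint C -> forall m,
  gco A B C (m + k) * Hf C k (INR m) = gco A B C m * Gf A B k (INR m).
Proof.
  intros HC; induction k; intros m; simpl; [rewrite Nat.add_0_r; ring|].
  replace (m + S k)%nat with (S m + k)%nat by lia.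
  pose proof (IHk (S m)) as E. rewrite S_INR in E.
  transitivity (gco A B C (S m + k) * Hf C k (INR m + 1) * ((C + INR m) * (INR m + 1))); [ring|].
  rewrite E. transitivity (gco A B C (S m) * ((C + INR m) * (INR m + 1)) * Gf A B k (INR m + 1)); [ring|].
  rewrite gco_step by auto. ring.
Qed.

Lemma gco_GH2 A B C k D m : notint C -> (k <= D)%nat ->
  gco A B C (m + k) * Hf C D (INR m) =
  gco A B C m * Gf A B k (INR m) * Hf C (D - k) (INR m + INR k).
Proof.
  intros HC Hk. replace D with (k + (D - k))%nat at 1 by lia.
  rewrite Hf_add. rewrite <- (gco_GH A B C k HC m). ring.
Qed.

Definition Phi A B C D (p q : list R) (y : R) : R :=
  sumR D (fun i => nth i p 0 * Gf A B (D - 1 - i) y * Hf C (S i) (y + INR (D - 1 - i))) +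
  sumR (S D) (fun j => nth j q 0 * (C / (A * B)) * (y + INR (D - j)) * Gf A B (D - j) y *
                        Hf C j (y + INR (D - j))).

Lemma IsP_Phi A B C D p q : IsP (Phi A B C D p q).
Proof.
  unfold Phi. apply IsP_plus; apply IsP_sumR; intros i.
  - apply IsP_mult; [apply IsP_mult; [apply IsP_const|apply IsP_Gf]|].
    apply IsP_shift, IsP_Hf.
  - apply IsP_mult; [apply IsP_mult; [apply IsP_mult; [apply IsP_const|]|apply IsP_Gf]|].
    + apply IsP_plus; [apply IsP_id|apply IsP_const].
    + apply IsP_shift, IsP_Hf.
Qed.

Lemma sumR_mult_r n f c : sumR n f * c = sumR n (fun i => f i * c).
Proof. induction n; simpl; [ring|rewrite <- IHn; ring]. Qed.

Lemma E_Phi A B C D p q m : notint A -> notint B -> notint C ->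
  (forall i, (D <= i)%nat -> nth i p 0 = 0) -> (forall j, (S D <= j)%nat -> nth j q 0 = 0) ->
  (conv p (gco A B C) (m + D) + conv q (gco (A+1) (B+1) (C+1)) (m + D)) * Hf C D (INR (S m)) =
  gco A B C (S m) * Phi A B C D p q (INR (S m)).
Proof.
  intros HA HB HC Hp Hq.
  rewrite (conv_trunc D p) by (auto; lia). rewrite (conv_trunc (S D) q) by (auto; lia).
  unfold Phi. rewrite Rmult_plus_distr_r, Rmult_plus_distr_l, !sumR_mult_r, <- !sumR_scal.
  f_equal; apply sumR_ext; intros i Hi.
  - replace (m + D - i)%nat with (S m + (D - 1 - i))%nat by lia.
    transitivity (nth i p 0 * (gco A B C (S m + (D - 1 - i)) * Hf C D (INR (S m)))); [ring|].
    rewrite gco_GH2 by (auto; lia). replace (D - (D - 1 - i))%nat with (S i) by lia. ring.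
  - rewrite gco_shift by auto.
    replace (S (m + D - i))%nat with (S m + (D - i))%nat by lia.
    transitivity (nth i q 0 * (C / (A * B)) * (INR (m + D - i) + 1) *
       (gco A B C (S m + (D - i)) * Hf C D (INR (S m)))); [ring|].
    rewrite gco_GH2 by (auto; lia). replace (D - (D - i))%nat with i by lia.
    replace (INR (m + D - i) + 1) with (INR (S m) + INR (D - i)).
    + ring.
    + rewrite <- plus_INR, <- S_INR. f_equal. lia.
Qed.

Lemma Phi_zero A B C D p q : notint A -> notint B -> notint C ->
  (forall i, (D <= i)%nat -> nth i p 0 = 0) -> (forall j, (S D <= j)%nat -> nth j q 0 = 0) ->
  (forall N, conv p (gco A B C) N + conv q (gco (A+1) (B+1) (C+1)) N = 0) ->
  forall y, Phi A B C D p q y = 0.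
Proof.
  intros HA HB HC Hp Hq HE.
  apply (IsP_ident _ _ (IsP_Phi A B C D p q) (Sinf_nat 1)).
  intros s [n [Hn ->]]. destruct n as [|m]; [lia|].
  pose proof (E_Phi A B C D p q m HA HB HC Hp Hq) as E.
  rewrite HE, Rmult_0_l in E.
  pose proof (gco_nz A B C (S m) HA HB HC).
  symmetry in E. apply Rmult_integral in E. destruct E; auto. contradiction.
Qed.

Lemma notint_minus_nat A n : notint A -> A - INR n <> 0.
Proof. intros H E. apply (H (Z.of_nat n)). rewrite <- INR_IZR_INZ. lra. Qed.

Lemma Hf_nz C k : forall y, (forall j, C + (y + INR j) <> 0) -> (forall j, y + INR j + 1 <> 0) ->
  Hf C k y <> 0.
Proof.
  induction k; intros y H1 H2; simpl; [lra|].
  apply Rmult_integral_contrapositive; split; [apply Rmult_integral_contrapositive; split|].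
  - specialize (H1 O); simpl in H1; lra.
  - specialize (H2 O); simpl in H2; lra.
  - apply IHk.
    + intros j; specialize (H1 (S j)); rewrite S_INR in H1; lra.
    + intros j; specialize (H2 (S j)); rewrite S_INR in H2; lra.
Qed.

Lemma sumR_S n f : sumR (S n) f = sumR n f + f n.
Proof. reflexivity. Qed.

Lemma Phi_at A B C d p q y0 : (A + y0) * (B + y0) = 0 ->
  Phi A B C (S d) p q y0 = Hf C (S d) y0 * (nth d p 0 + nth (S d) q 0 * (C / (A * B)) * y0).
Proof.
  intros H0. unfold Phi.
  rewrite (sumR_S (S d)), (sumR_S d).
  rewrite (sumR_zero d), (sumR_zero (S d)).
  - replace (S d - 1 - d)%nat with O by lia. replace (S d - S d)%nat with O by lia.
    cbn [Gf INR]. rewrite !Rplus_0_r. ring.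
  - intros j Hj. replace (S d - j)%nat with (S (d - j)) by lia. cbn [Gf].
    rewrite H0; ring.
  - intros i Hi. replace (S d - 1 - i)%nat with (S (d - 1 - i)) by lia. cbn [Gf].
    rewrite H0; ring.
Qed.

Lemma indep_step A B C d p q : notint A -> notint B -> notint C ->
  notint (C - A) -> notint (C - B) -> notint (A - B) ->
  (forall N, conv p (gco A B C) N + conv q (gco (A+1) (B+1) (C+1)) N = 0) ->
  (forall i, (S d <= i)%nat -> nth i p 0 = 0) -> (forall j, (S (S d) <= j)%nat -> nth j q 0 = 0) ->
  nth d p 0 = 0 /\ nth (S d) q 0 = 0.
Proof.
  intros HA HB HC HCA HCB HAB HE Hp Hq.
  pose proof (Phi_zero A B C (S d) p q HA HB HC Hp Hq HE) as HZ.
  assert (EA : nth d p 0 + nth (S d) q 0 * (C / (A * B)) * (- A) = 0).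
  { pose proof (Phi_at A B C d p q (- A) ltac:(ring)) as E. rewrite HZ in E.
    symmetry in E; apply Rmult_integral in E; destruct E as [E|E]; auto.
    exfalso; revert E; apply Hf_nz.
    - intros j. pose proof (notint_plus_nat (C - A) j HCA); lra.
    - intros j. pose proof (notint_minus_nat A (S j) HA). rewrite S_INR in H; lra. }
  assert (EB : nth d p 0 + nth (S d) q 0 * (C / (A * B)) * (- B) = 0).
  { pose proof (Phi_at A B C d p q (- B) ltac:(ring)) as E. rewrite HZ in E.
    symmetry in E; apply Rmult_integral in E; destruct E as [E|E]; auto.
    exfalso; revert E; apply Hf_nz.
    - intros j. pose proof (notint_plus_nat (C - B) j HCB); lra.
    - intros j. pose proof (notint_minus_nat B (S j) HB). rewrite S_INR in H; lra. }
  assert (Hk : C / (A * B) <> 0).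
  { pose proof (nint_nz _ HA); pose proof (nint_nz _ HB); pose proof (nint_nz _ HC).
    unfold Rdiv; apply Rmult_integral_contrapositive; split; auto.
    apply Rinv_neq_0_compat, Rmult_integral_contrapositive; auto. }
  assert (Hq0 : nth (S d) q 0 = 0).
  { assert (nth (S d) q 0 * (C / (A * B)) * (A - B) = 0) by lra.
    apply Rmult_integral in H; destruct H as [H|H].
    - apply Rmult_integral in H; destruct H; auto; contradiction.
    - exfalso; apply (nint_nz _ HAB); auto. }
  split; auto. rewrite Hq0 in EA; lra.
Qed.

Lemma indep A B C p q : notint A -> notint B -> notint C ->
  notint (C - A) -> notint (C - B) -> notint (A - B) ->
  (forall N, conv p (gco A B C) N + conv q (gco (A+1) (B+1) (C+1)) N = 0) ->
  forall j, nth j q 0 = 0.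
Proof.
  intros HA HB HC HCA HCB HAB HE.
  assert (Inv : forall d, (forall i, (d <= i)%nat -> nth i p 0 = 0) ->
     (forall j, (S d <= j)%nat -> nth j q 0 = 0) -> forall j, nth j q 0 = 0).
  { induction d; intros Hp Hq.
    - assert (nth 0 q 0 = 0).
      { specialize (HE O). unfold conv in HE. simpl in HE. rewrite !gco_0, (Hp O) in HE by lia.
        lra. }
      intros [|j]; auto. apply Hq; lia.
    - destruct (indep_step A B C d p q HA HB HC HCA HCB HAB HE Hp Hq) as [E1 E2].
      apply IHd.
      + intros i Hi. destruct (Nat.eq_dec i d); [subst; auto|apply Hp; lia].
      + intros j Hj. destruct (Nat.eq_dec j (S d)); [subst; auto|apply Hq; lia]. }
  apply (Inv (length p + length q)%nat).
  - intros i Hi; apply nth_overflow; lia.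
  - intros j Hj; apply nth_overflow; lia.
Qed.


Definition NN (f : ratfun) a b c x := peval (rnum f) a b c x.
Definition DD (f : ratfun) a b c x := peval (rden f) a b c x.

Definition Efun Qf Rf Qf' Rf' a b c x :=
  DD Qf a b c x * DD Rf a b c x * DD Qf' (a+1) (b+1) (c+1) x * DD Rf' (a+1) (b+1) (c+1) x.

Definition Pfun Rf Qf' a b c x :=
  (a+1)*(b+1)*(x*(1-x)) * NN Rf a b c x * DD Qf' (a+1) (b+1) (c+1) x -
  c*(c+1) * NN Qf' (a+1) (b+1) (c+1) x * DD Rf a b c x.

Definition Vfun Qf Rf Qf' Rf' a b c x :=
  Pfun Rf Qf' a b c x * DD Qf a b c x * DD Rf' (a+1) (b+1) (c+1) x.

Definition Ufun Qf Rf Qf' Rf' a b c x :=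
  c*(c+1) * NN Qf a b c x * DD Rf a b c x * DD Qf' (a+1) (b+1) (c+1) x * DD Rf' (a+1) (b+1) (c+1) x +
  (c+1)*(c-(a+b+1)*x) * NN Rf a b c x * DD Qf a b c x * DD Qf' (a+1) (b+1) (c+1) x * DD Rf' (a+1) (b+1) (c+1) x -
  c*(c+1) * NN Rf' (a+1) (b+1) (c+1) x * DD Qf a b c x * DD Rf a b c x * DD Qf' (a+1) (b+1) (c+1) x.

Lemma MP_opp f : MP f -> MP (fun a b c x => - f a b c x).
Proof. intros [? [? [? ?]]]; repeat split; intros; apply IsP_opp; auto. Qed.

Ltac mp := repeat first [ apply MP_minus | apply MP_plus | apply MP_opp | apply MP_mult | apply MP_const
  | apply MP_a | apply MP_b | apply MP_c | apply MP_x | apply MP_peval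
  | apply (MP_shift (fun a b c x => peval _ a b c x)); apply MP_peval ].

Lemma MP_E Qf Rf Qf' Rf' : MP (Efun Qf Rf Qf' Rf').
Proof. unfold Efun, DD. mp. Qed.
Lemma MP_P Rf Qf' : MP (Pfun Rf Qf').
Proof. unfold Pfun, NN, DD. mp. Qed.
Lemma MP_V Qf Rf Qf' Rf' : MP (Vfun Qf Rf Qf' Rf').
Proof. unfold Vfun, Pfun, NN, DD. mp. Qed.
Lemma MP_U Qf Rf Qf' Rf' : MP (Ufun Qf Rf Qf' Rf').
Proof. unfold Ufun, NN, DD. mp. Qed.

Lemma standing_shift a b c : standing a b c -> standing (a+1) (b+1) (c+1).
Proof.
  intros [H1 [H2 [H3 [H4 [H5 [H6 H7]]]]]].
  unfold standing. repeat split; try apply notint_shift1; auto.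
  - replace (c + 1 - (a + 1)) with (c - a) by ring; auto.
  - replace (c + 1 - (b + 1)) with (c - b) by ring; auto.
  - intros z E; apply (H6 (z + 1)%Z). rewrite plus_IZR. simpl. lra.
  - replace (a + 1 - (b + 1)) with (a - b) by ring; auto.
Qed.

Lemma pointwise k l m Qf Rf Qf' Rf' a b c x :
  contiguous k l m Qf Rf -> contiguous (k - 1) (l - 1) (m - 1) Qf' Rf' ->
  standing a b c -> -1 < x < 1 -> Efun Qf Rf Qf' Rf' a b c x <> 0 ->
  Ufun Qf Rf Qf' Rf' a b c x * hypF (a+1) (b+1) (c+1) x +
  Vfun Qf Rf Qf' Rf' a b c x * hypF (a+1+1) (b+1+1) (c+1+1) x = 0.
Proof.
  intros [_ [_ C1]] [_ [_ C2]] Hs Hx HE.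
  unfold Efun in HE.
  assert (DQ : DD Qf a b c x <> 0) by (intro E; apply HE; rewrite E; ring).
  assert (DR : DD Rf a b c x <> 0) by (intro E; apply HE; rewrite E; ring).
  assert (DQ' : DD Qf' (a+1) (b+1) (c+1) x <> 0) by (intro E; apply HE; rewrite E; ring).
  assert (DR' : DD Rf' (a+1) (b+1) (c+1) x <> 0) by (intro E; apply HE; rewrite E; ring).
  pose proof (C1 a b c x Hs Hx DQ DR) as E1.
  pose proof (C2 (a+1) (b+1) (c+1) x (standing_shift a b c Hs) Hx DQ' DR') as E2.
  replace (a + 1 + IZR (k - 1)) with (a + IZR k) in E2 by (rewrite minus_IZR; ring).
  replace (b + 1 + IZR (l - 1)) with (b + IZR l) in E2 by (rewrite minus_IZR; ring).
  replace (c + 1 + IZR (m - 1)) with (c + IZR m) in E2 by (rewrite minus_IZR; ring).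
  destruct Hs as [Ha [Hb [_ [_ [Hc _]]]]].
  pose proof (three_term a b c x Ha Hb Hc Hx) as E3.
  unfold reval in E1, E2. fold (NN Qf a b c x) (DD Qf a b c x) (NN Rf a b c x) (DD Rf a b c x) in E1.
  fold (NN Qf' (a+1) (b+1) (c+1) x) (DD Qf' (a+1) (b+1) (c+1) x)
       (NN Rf' (a+1) (b+1) (c+1) x) (DD Rf' (a+1) (b+1) (c+1) x) in E2.
  unfold Ufun, Vfun, Pfun.
  set (F0 := hypF a b c x) in *. set (F1 := hypF (a+1) (b+1) (c+1) x) in *.
  set (F2 := hypF (a+1+1) (b+1+1) (c+1+1) x) in *.
  set (Fk := hypF (a + IZR k) (b + IZR l) (c + IZR m) x) in *.
  set (nq := NN Qf a b c x) in *. set (dq := DD Qf a b c x) in *.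
  set (nr := NN Rf a b c x) in *. set (dr := DD Rf a b c x) in *.
  set (nq' := NN Qf' (a+1) (b+1) (c+1) x) in *. set (dq' := DD Qf' (a+1) (b+1) (c+1) x) in *.
  set (nr' := NN Rf' (a+1) (b+1) (c+1) x) in *. set (dr' := DD Rf' (a+1) (b+1) (c+1) x) in *.
  assert (Z1 : nq / dq * F1 + nr / dr * F0 - (nq' / dq' * F2 + nr' / dr' * F1) = 0) by lra.
  assert (Z2 : (a+1)*(b+1)*(x*(1-x)) * F2 + (c+1)*(c-(a+b+1)*x) * F1 - c*(c+1)*F0 = 0) by lra.
  transitivity (c*(c+1)*(dq*dr*dq'*dr') * (nq / dq * F1 + nr / dr * F0 - (nq' / dq' * F2 + nr' / dr' * F1))
     + nr * dq * dq' * dr' * ((a+1)*(b+1)*(x*(1-x)) * F2 + (c+1)*(c-(a+b+1)*x) * F1 - c*(c+1)*F0)).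
  - field; auto.
  - rewrite Z1, Z2; ring.
Qed.

Lemma heval_nth_zero l : (forall j, nth j l 0 = 0) -> forall x, heval l x = 0.
Proof.
  induction l as [|c l IH]; intros H x; simpl; [auto|].
  rewrite IH; [|intros j; apply (H (S j))]. specialize (H O); simpl in H; rewrite H; ring.
Qed.

Lemma inner k l m Qf Rf Qf' Rf' a b c x :
  contiguous k l m Qf Rf -> contiguous (k - 1) (l - 1) (m - 1) Qf' Rf' ->
  standing a b c -> -1 < x < 1 -> Efun Qf Rf Qf' Rf' a b c x <> 0 ->
  Pfun Rf Qf' a b c x = 0.
Proof.
  intros C1 C2 Hs Hx HE.
  pose proof (standing_shift a b c Hs) as Hs1.
  destruct Hs1 as [HA [HB [HCA [HCB [HC [_ HAB]]]]]].
  destruct (MP_U Qf Rf Qf' Rf') as [_ [_ [_ U4]]].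
  destruct (MP_V Qf Rf Qf' Rf') as [_ [_ [_ V4]]].
  destruct (MP_E Qf Rf Qf' Rf') as [_ [_ [_ E4]]].
  destruct (IsP_mult _ _ (U4 a b c) (E4 a b c)) as [lu Hlu].
  destruct (IsP_mult _ _ (V4 a b c) (E4 a b c)) as [lv Hlv].
  set (g1 := gco (a+1) (b+1) (c+1)). set (g2 := gco (a+1+1) (b+1+1) (c+1+1)).
  assert (HA1 := notint_shift1 _ HA). assert (HB1 := notint_shift1 _ HB).
  assert (HC1 := notint_shift1 _ HC).
  assert (R1 : forall y, -1 < y < 1 -> Rbar_lt (Rabs y) (CV_radius g1)) by (intros; apply radius_lt; auto).
  assert (R2 : forall y, -1 < y < 1 -> Rbar_lt (Rabs y) (CV_radius g2)) by (intros; apply radius_lt; auto).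
  assert (Z : forall y, -1 < y < 1 -> PSeries (PS_plus (conv lu g1) (conv lv g2)) y = 0).
  { intros y Hy. rewrite PSeries_plus.
    2,3: apply CV_radius_inside, conv_radius; auto.
    rewrite !conv_PSeries by auto. rewrite <- Hlu, <- Hlv.
    unfold g1, g2; rewrite <- !hypF_PSeries.
    destruct (Req_dec (Efun Qf Rf Qf' Rf' a b c y) 0) as [E0|E0].
    - rewrite E0; ring.
    - pose proof (pointwise k l m Qf Rf Qf' Rf' a b c y C1 C2 Hs Hy E0) as P.
      transitivity (Efun Qf Rf Qf' Rf' a b c y *
        (Ufun Qf Rf Qf' Rf' a b c y * hypF (a+1) (b+1) (c+1) y +
         Vfun Qf Rf Qf' Rf' a b c y * hypF (a+1+1) (b+1+1) (c+1+1) y)); [ring|].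
      rewrite P; ring. }
  assert (Rp : Rbar_lt 0 (CV_radius (PS_plus (conv lu g1) (conv lv g2)))).
  { apply radius_plus; apply conv_radius; unfold g1, g2; rewrite gco_radius by auto;
    simpl; lra. }
  pose proof (pseries_zero_coef _ Rp Z) as Co.
  assert (Co' : forall N, conv lu (gco (a+1) (b+1) (c+1)) N +
                   conv lv (gco (a+1+1) (b+1+1) (c+1+1)) N = 0) by (intros N; apply (Co N)).
  pose proof (indep (a+1) (b+1) (c+1) lu lv HA HB HC HCA HCB HAB Co') as Hq.
  pose proof (heval_nth_zero lv Hq x) as Vx. rewrite <- Hlv in Vx.
  apply Rmult_integral in Vx; destruct Vx as [Vx|Vx]; [|contradiction].
  unfold Vfun in Vx. unfold Efun in HE.
  apply Rmult_integral in Vx; destruct Vx as [Vx|Vx].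
  - apply Rmult_integral in Vx; destruct Vx as [Vx|Vx]; auto.
    exfalso; apply HE; rewrite Vx; ring.
  - exfalso; apply HE; rewrite Vx; ring.
Qed.

Theorem proposition1p3 :
  forall (k l m : Z) (Qf Rf Qf' Rf' : ratfun),
    contiguous k l m Qf Rf ->
    contiguous (k - 1) (l - 1) (m - 1) Qf' Rf' ->
    forall a b c x : R,
      rdefined Rf a b c x ->
      rdefined Qf' (a + 1) (b + 1) (c + 1) x ->
      a + 1 <> 0 -> b + 1 <> 0 -> x <> 0 -> 1 - x <> 0 ->
      reval Rf a b c x =
        c * (c + 1) / ((a + 1) * (b + 1) * x * (1 - x)) *
          reval Qf' (a + 1) (b + 1) (c + 1) x.
Proof.
  intros k l m Qf Rf Qf' Rf' C1 C2 a b c x HR HQ' Ha Hb Hx Hx1.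
  assert (W : exists a0 b0 c0 x0, Efun Qf Rf Qf' Rf' a0 b0 c0 x0 <> 0).
  { destruct C1 as [[q1 [q2 [q3 [q4 Vq]]]] [[r1 [r2 [r3 [r4 Vr]]]] _]].
    destruct C2 as [[s1 [s2 [s3 [s4 Vs]]]] [[t1 [t2 [t3 [t4 Vt]]]] _]].
    assert (MQ : MP (DD Qf)) by (unfold DD; mp).
    assert (MR : MP (DD Rf)) by (unfold DD; mp).
    assert (MQ' : MP (fun a b c x => DD Qf' (a+1) (b+1) (c+1) x)) by (unfold DD; mp).
    assert (MR' : MP (fun a b c x => DD Rf' (a+1) (b+1) (c+1) x)) by (unfold DD; mp).
    assert (Vs' : DD Qf' (s1 - 1 + 1) (s2 - 1 + 1) (s3 - 1 + 1) s4 <> 0).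
    { replace (s1 - 1 + 1) with s1 by ring. replace (s2 - 1 + 1) with s2 by ring.
      replace (s3 - 1 + 1) with s3 by ring. auto. }
    assert (Vt' : DD Rf' (t1 - 1 + 1) (t2 - 1 + 1) (t3 - 1 + 1) t4 <> 0).
    { replace (t1 - 1 + 1) with t1 by ring. replace (t2 - 1 + 1) with t2 by ring.
      replace (t3 - 1 + 1) with t3 by ring. auto. }
    destruct (nonzero_prod _ _ q1 q2 q3 q4 r1 r2 r3 r4 MQ MR Vq Vr) as [e1 [e2 [e3 [e4 H1]]]].
    destruct (nonzero_prod _ _ e1 e2 e3 e4 (s1-1) (s2-1) (s3-1) s4 (MP_mult _ _ MQ MR) MQ' H1 Vs')
      as [f1 [f2 [f3 [f4 H2]]]].
    destruct (nonzero_prod _ _ f1 f2 f3 f4 (t1-1) (t2-1) (t3-1) t4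
      (MP_mult _ _ (MP_mult _ _ MQ MR) MQ') MR' H2 Vt') as [h1 [h2 [h3 [h4 H3]]]].
    exists h1, h2, h3, h4. unfold Efun. auto. }
  destruct W as [a0 [b0 [c0 [x0 W]]]].
  pose proof (chain _ _ a0 b0 c0 x0 (MP_E Qf Rf Qf' Rf') (MP_P Rf Qf') W
    (fun a b c x Hs Hx HE => inner k l m Qf Rf Qf' Rf' a b c x C1 C2 Hs Hx HE) a b c x) as P.
  unfold Pfun, NN, DD in P. unfold reval. unfold rdefined in HR, HQ'.
  set (nr := peval (rnum Rf) a b c x) in *. set (dr := peval (rden Rf) a b c x) in *.
  set (nq := peval (rnum Qf') (a+1) (b+1) (c+1) x) in *.
  set (dq := peval (rden Qf') (a+1) (b+1) (c+1) x) in *.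
  assert (E : nr / dr - c * (c + 1) / ((a + 1) * (b + 1) * x * (1 - x)) * (nq / dq) =
     ((a+1)*(b+1)*(x*(1-x)) * nr * dq - c*(c+1) * nq * dr) / ((a + 1) * (b + 1) * x * (1 - x) * dr * dq)).
  { field. repeat split; auto. }
  rewrite P in E. rewrite Rdiv_0_l in E. lra.
Qed.
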